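(* Let $V$ be a finite-dimensional $\Bbbk$-vector space and $R$ a finite scheme of length $r$ admitting a closed embedding $i_1\colon R\hookrightarrow\mathbb P V$. Then there exists a closed embedding $i_2\colon R\hookrightarrow\mathbb P V$ such that $\dim_\Bbbk\big(V^*/I(i_2(R))_1\big)=\min\{r,\dim V\}$.
   Context: $\Bbbk$ algebraically closed. $V^*=H^0(\mathbb PV,\mathcal O(1))$ and $I(i_2(R))_1\subset V^*$ is the space of linear forms vanishing on $i_2(R)$. *)

(* Defs.v *)
From HB Require Import structures.
From mathcomp Require Import all_boot all_order all_algebra all_field.
Set Implicit Arguments. Unset Strict Implicit. Unset Printing Implicit Defensive.
Import GRing.Theory.
Local Open Scope ring_scope.

(* Model of finite schemes and their closed embeddings into P V.
   - A finite k-scheme R = Spec A is modelled by a (nonzero) commutative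
     finite-dimensional k-algebra A (an falgType k with commutative product);
     its length is \dim {:A}.
   - V^* = H^0(P V, O(1)) is 'Hom(V, k^o) (linear forms on V).
   - A morphism Spec A -> P V is given (Pic A = 0 since A is semilocal) by a
     k-linear map phi : V^* -> A whose image generates the unit ideal; for k
     infinite some linear form l has phi l a unit, so the morphism lands in the
     affine chart D(l) = Spec k[V^*/l], where it corresponds to the k-algebra map
     m/l |-> phi m * (phi l)^-1.  It is a closed embedding iff this algebra map
     is surjective, i.e. the values phi m / phi l generate A as a k-algebra. *)
Definition dual (k : fieldType) (V : vectType k) := 'Hom(V, k^o).

Definition closed_embedding (k : fieldType) (V : vectType k) (A : falgType k)
  (phi : 'Hom(dual V, A)) : Prop :=
  exists l : dual V, phi l \is a GRing.unit /\
    agenv (<[(phi l)^-1]> * limg phi)%VS = fullv.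

(* I(i(R))_1 : linear forms vanishing on the image of R, i.e. with phi m = 0. *)
Definition linear_forms_vanishing (k : fieldType) (V : vectType k) (A : falgType k)
  (phi : 'Hom(dual V, A)) : {vspace dual V} := lker phi.

Definition quot_dim (k : fieldType) (V : vectType k) (W : {vspace dual V}) : nat :=
  (\dim {: dual V} - \dim W)%N.

(* Main.v *)
Require Import Defs.
From HB Require Import structures.
From mathcomp Require Import all_boot all_order all_algebra all_field.
Local Open Scope ring_scope.
Import GRing.Theory.
Section S.
Variables (k : fieldType) (U : vectType k) (A : falgType k) (n : nat) (X : n.-tuple U) (i : 'I_n) (a : A).
Definition sc (x : U) : A := coord X i x *: a.
Fact sc_lin : linear sc.
Proof. by move=> c x y; rewrite /sc linearP /= scalerDl scalerA. Qed.
HB.instance Definition _ := GRing.isLinear.Build k U A _ sc sc_lin.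
Lemma scE x : linfun sc x = coord X i x *: a.
Proof. by rewrite lfunE. Qed.
End S.
Arguments sc {k U A n} X i a x.
Lemma dim_dual (k : fieldType) (V : vectType k) : \dim {: dual V} = \dim {: V}.
Proof. rewrite !dimvf; exact: muln1. Qed.

Lemma ker_img_dim {k : fieldType} {V : vectType k} {A : falgType k}
  (psi : 'Hom(dual V, A)) : (\dim (lker psi) + \dim (limg psi))%N = \dim {: V}.
Proof. by rewrite -dim_dual -(limg_ker_dim psi fullv) capfv. Qed.

Theorem mainTheorem17 (k : closedFieldType) (V : vectType k) (A : falgType k)
  (A_comm : forall x y : A, x * y = y * x)
  (i1 : 'Hom(dual V, A)) (hi1 : closed_embedding i1) :
  exists i2 : 'Hom(dual V, A), closed_embedding i2 /\
    quot_dim (linear_forms_vanishing i2) = minn (\dim {: A}) (\dim {: V}).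
Proof.
case: hi1 => l [hu hgen].
set u := i1 l in hu hgen.
set m := minn (\dim {: A}) (\dim {: V}).
have rk_le : forall psi : 'Hom(dual V, A), (\dim (limg psi) <= m)%N.
  move=> psi; rewrite leq_min dimvS ?subvf //=.
  by rewrite -(ker_img_dim psi) leq_addl.
have claim : forall j, (j <= m)%N -> exists psi : 'Hom(dual V, A),
    [/\ psi l = u, (limg i1 <= limg psi)%VS & (j <= \dim (limg psi))%N].
  elim=> [_|j IH hj].
    by exists i1; split; rewrite ?subvv.
  have [psi [hl hsub hdim]] := IH (ltnW hj).
  case: (ltnP j (\dim (limg psi))) => [hlt|hle].
    by exists psi; split.
  have edim : \dim (limg psi) = j by apply/eqP; rewrite eqn_leq hle hdim.
  have hjA : (j < \dim {: A})%N by move: hj; rewrite leq_min => /andP[].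
  have hjV : (j < \dim {: V})%N by move: hj; rewrite leq_min => /andP[].
  have hker : lker psi != 0%VS.
    rewrite -dimv_eq0 -lt0n; move: (ker_img_dim psi); rewrite edim => E.
    by move: hjV; rewrite -E -{1}(add0n j) ltn_add2r.
  have hcomp : ((limg psi)^C)%VS != 0%VS.
    by rewrite -dimv_eq0 dimv_compl edim -lt0n subn_gt0.
  set v := vpick (lker psi).
  have v0 : v != 0 by rewrite vpick0.
  have pv : psi v = 0 by apply/eqP; rewrite -memv_ker memv_pick.
  set a := vpick ((limg psi)^C)%VS.
  have a0 : a != 0 by rewrite vpick0.
  have aC : a \in ((limg psi)^C)%VS by apply: memv_pick.
  have u0 : u != 0.
    by apply/negP => /eqP u0; move: hu; rewrite u0 unitr0.
  have lv : l \notin <[v]>%VS.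
    apply/negP => /vlineP [c hc].
    by move: u0; rewrite -hl hc linearZ /= pv scaler0 eqxx.
  pose X := [tuple l; v].
  have fX : free X.
    rewrite /= free_cons span_seq1 lv /=.
    by rewrite seq1_free.
  pose psi' := psi + linfun (sc X (1 : 'I_2) a).
  have p'l : psi' l = u.
    rewrite add_lfunE scE hl.
    have -> : coord X (1 : 'I_2) l = 0 by rewrite (coord_free (0 : 'I_2) (1 : 'I_2) fX).
    by rewrite scale0r addr0.
  have p'v : psi' v = a.
    rewrite add_lfunE scE pv add0r.
    have -> : coord X (1 : 'I_2) v = 1 by rewrite (coord_free (1 : 'I_2) (1 : 'I_2) fX).
    by rewrite scale1r.
  have sub1 : (limg psi <= limg psi')%VS.
    apply/subvP => y /memv_imgP [x _ ->].
    have -> : psi x = psi' x - coord X (1 : 'I_2) x *: psi' v.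
      by rewrite add_lfunE scE p'v addrK.
    by apply: memvB; [|apply: memvZ]; apply: memv_img; apply: memvf.
  have sub2 : (<[a]> <= limg psi')%VS.
    by rewrite -memvE -p'v memv_img ?memvf.
  exists psi'; split => //.
    exact: subv_trans hsub sub1.
  have hcap : \dim (limg psi :&: <[a]>) = 0%N.
    apply/eqP; rewrite dimv_eq0 -subv0 -(capv_compl (limg psi)).
    by rewrite capvS ?subvv // -memvE.
  have := dimv_sum_cap (limg psi) <[a]>.
  rewrite hcap dim_vline a0 addn0 edim addn1 => <-.
  by apply: dimvS; rewrite subv_add sub1 sub2.
have [psi [hl hsub hdim]] := claim m (leqnn m).
exists psi; split.
  exists l; rewrite hl; split => //.
  apply/eqP; rewrite eqEsubv subvf /= -hgen.
  by apply: agenvS; apply: prodvS; rewrite ?subvv.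
rewrite /quot_dim /linear_forms_vanishing dim_dual -(ker_img_dim psi) addKn.
by apply/eqP; rewrite eqn_leq rk_le hdim.
Qed.
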